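(* Let $R$ be a commutative ring endowed with a translation-invariant partial order $\le$ on its additive group, and assume that $R$ is strongly localizable. Then $R$ is localizable.
   Context: Rings are commutative with unit $1$. Translation-invariant means $r\le s$ implies $r+t\le s+t$; $R^+=\{r:0\le r\}$. $\mathrm{Loc}(R)$ is the set of $s\in 1+R^+=\{1+t:t\in R^+\}$ such that for all $r\in R$, $rs\in R^+$ implies $r\in R^+$. $R$ is localizable if for every $r\in R$ there exists $s\in\mathrm{Loc}(R)$ with $-s\le r\le s$. $R$ is strongly localizable if $r^2\in R^+$ for all $r\in R$ and $\mathrm{Loc}(R)=1+R^+$. *)

(* Defs.v *)
From HB Require Import structures.
From mathcomp Require Import all_boot all_algebra.
Set Implicit Arguments. Unset Strict Implicit. Unset Printing Implicit Defensive.
Import GRing.Theory.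
Local Open Scope ring_scope.

Definition partial_order (R : Type) (le : R -> R -> Prop) : Prop :=
  (forall x, le x x) /\
  (forall x y, le x y -> le y x -> x = y) /\
  (forall x y z, le x y -> le y z -> le x z).

Definition translation_invariant (R : comPzRingType) (le : R -> R -> Prop) : Prop :=
  forall r s t : R, le r s -> le (r + t) (s + t).

Definition Rpos (R : comPzRingType) (le : R -> R -> Prop) (r : R) : Prop := le 0 r.

Definition one_plus_pos (R : comPzRingType) (le : R -> R -> Prop) (s : R) : Prop :=
  exists t, Rpos le t /\ s = 1 + t.

Definition Loc (R : comPzRingType) (le : R -> R -> Prop) (s : R) : Prop :=
  one_plus_pos le s /\ (forall r : R, Rpos le (r * s) -> Rpos le r).

Definition localizable (R : comPzRingType) (le : R -> R -> Prop) : Prop :=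
  forall r : R, exists s, Loc le s /\ le (- s) r /\ le r s.

Definition strongly_localizable (R : comPzRingType) (le : R -> R -> Prop) : Prop :=
  (forall r : R, Rpos le (r ^+ 2)) /\ (forall s : R, Loc le s <-> one_plus_pos le s).

(* Main.v *)
Require Import Defs.
From mathcomp Require Import all_boot all_algebra.
From mathcomp Require Import ring.
Import GRing.Theory.
Local Open Scope ring_scope.

Theorem proposition2 (R : comPzRingType) (le : R -> R -> Prop) :
  partial_order le -> translation_invariant le ->
  strongly_localizable le -> localizable le.
Proof.
move=> [_ [_ Htr]] Hti [Hsq Hloc] r.
have Hadd : forall a b, le 0 a -> le 0 b -> le 0 (a + b).
  move=> a b Ha Hb; apply: (Htr _ b); first by [].
  by have := Hti _ _ b Ha; rewrite add0r.
have H1 : le 0 1 by have := Hsq 1; rewrite expr1n.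
have H2 : Loc le (1 + 1) by apply/Hloc; exists 1; split.
have Hdiv : forall x, le 0 (x * (1 + 1)) -> le 0 x by move=> x; apply: H2.2.
have Hs : Loc le (1 + r ^+ 2) by apply/Hloc; exists (r ^+ 2); split.
exists (1 + r ^+ 2); split; first by [].
split.
- have P : le 0 (r + (1 + r ^+ 2)).
    apply: Hdiv.
    have -> : (r + (1 + r ^+ 2)) * (1 + 1) = (r + 1) ^+ 2 + (r ^+ 2 + 1) by ring.
    by apply: (Hadd); [apply: (Hsq) | apply: (Hadd); [apply: (Hsq) | exact: H1]].
  have := Hti _ _ (- (1 + r ^+ 2)) P.
  by rewrite add0r addrK.
- have P : le 0 ((1 + r ^+ 2) - r).
    apply: Hdiv.
    have -> : ((1 + r ^+ 2) - r) * (1 + 1) = (r - 1) ^+ 2 + (r ^+ 2 + 1) by ring.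
    by apply: (Hadd); [apply: (Hsq) | apply: (Hadd); [apply: (Hsq) | exact: H1]].
  have := Hti _ _ r P.
  by rewrite add0r subrK.
Qed.
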